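(* Let $p:\mathbb{R}^+\times\mathbb{R}^+\to[0,\infty)$ be bounded and continuous in $N$, and let $(n^0_j)_{j\ge1}$ be a nonnegative sequence with $\|n^0\|_1<\infty$ and $\|n^0\|_\infty<\infty$. Let $(n^m_j)$, $(N^m)$ be generated by the ITM upwind scheme under the CFL condition. Then for every $m\in\mathbb{N}$, $\|n^m\|_1=\sum_{j\ge1}\Delta s\,n^m_j=\|n^0\|_1$.
   Context: ITM upwind scheme: fix $\Delta s,\Delta t>0$; set $s_j=(j-\tfrac12)\Delta s$, $I_j=[(j-1)\Delta s,j\Delta s)$ for $j\in\{1,2,\dots\}$, and $t^m=m\Delta t$. For a sequence $u=(u_j)_{j\ge1}$, $\|u\|_1=\sum_{j\ge1}\Delta s|u_j|$ and $\|u\|_\infty=\sup_j|u_j|$. Given nonnegative initial values $(n^0_j)_{j\ge1}$, for $m=0,1,2,\dots$: $N^m\ge0$ is a solution of $N^m=\sum_{j\ge1}\Delta s\,p(s_j,N^m)\,n^m_j$ (a nonnegative solution always exists), one sets $n^m_0:=N^m$, and $n^{m+1}_j=n^m_j-\frac{\Delta t}{\Delta s}(n^m_j-n^m_{j-1})-\Delta t\,p(s_j,N^m)\,n^m_j$ for $j\ge1$. CFL condition: $\Delta t\le\left(\frac{1}{\Delta s}+\|p\|_\infty\right)^{-1}$, where $\|p\|_\infty=\sup|p|$. *)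

(* Defs.v *)
From Stdlib Require Import Reals.
From Coquelicot Require Import Coquelicot.
Open Scope R_scope.

Definition sgrid (ds : R) (j : nat) : R := (INR j - / 2) * ds.

(* ||u||_1 = sum_{j>=1} ds |u_j| (the value of the series; the statement
   always additionally asserts convergence explicitly). *)
Definition norm1 (ds : R) (u : nat -> R) : R :=
  Series (fun j => ds * Rabs (u (S j))).

(* The range of |p| on the domain s > 0, N >= 0; ||p||_inf is its sup. *)
Definition abs_p_range (p : R -> R -> R) (y : R) : Prop :=
  exists s N, 0 < s /\ 0 <= N /\ y = Rabs (p s N).

(* Main.v *)
Require Import Defs.
From Stdlib Require Import Reals.
From Coquelicot Require Import Coquelicot.
From Stdlib Require Import Lra Lia.
Open Scope R_scope.

Theorem mainTheorem3
  (ds dt : R) (p : R -> R -> R) (n : nat -> nat -> R) (N : nat -> R) (pinf : R)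
  (Hds : 0 < ds) (Hdt : 0 < dt)
  (* p : R^+ x R^+ -> [0, oo), bounded, continuous in N *)
  (Hp_nonneg : forall s x, 0 < s -> 0 <= x -> 0 <= p s x)
  (Hp_bdd : exists M, forall s x, 0 < s -> 0 <= x -> p s x <= M)
  (Hp_cont : forall s x, 0 < s -> 0 <= x ->
     filterlim (p s) (within (fun y => 0 <= y) (locally x)) (locally (p s x)))
  (* pinf = ||p||_inf = sup |p| *)
  (Hpinf : is_lub (abs_p_range p) pinf)
  (* initial data: nonnegative, finite l^1 and l^oo norms *)
  (Hn0_nonneg : forall j, (1 <= j)%nat -> 0 <= n 0%nat j)
  (Hn0_l1 : ex_series (fun j => ds * Rabs (n 0%nat (S j))))
  (Hn0_linf : exists B, forall j, (1 <= j)%nat -> Rabs (n 0%nat j) <= B)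
  (* N^m >= 0 solves N^m = sum_{j>=1} ds p(s_j, N^m) n^m_j *)
  (HN_nonneg : forall m, 0 <= N m)
  (HN_eq : forall m,
     is_series (fun j => ds * p (sgrid ds (S j)) (N m) * n m (S j)) (N m))
  (* boundary value n^m_0 := N^m *)
  (Hbd : forall m, n m 0%nat = N m)
  (* upwind update *)
  (Hstep : forall m j, (1 <= j)%nat ->
     n (S m) j = n m j - dt / ds * (n m j - n m (j - 1)%nat)
                 - dt * p (sgrid ds j) (N m) * n m j)
  (* CFL condition *)
  (HCFL : dt <= / (/ ds + pinf)) :
  forall m : nat,
    is_series (fun j => ds * Rabs (n m (S j))) (norm1 ds (n 0%nat)) /\
    is_series (fun j => ds * n m (S j)) (norm1 ds (n 0%nat)).
Proof.
  assert (Hpinf0 : 0 <= pinf).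
  { destruct Hpinf as [Hub _]. apply Rle_trans with (Rabs (p 1 0)).
    apply Rabs_pos. apply Hub. exists 1, 0. repeat split; lra. }
  assert (Hcoef : dt * (/ ds + pinf) <= 1).
  { assert (0 < / ds + pinf) by (assert (0 < / ds) by (apply Rinv_0_lt_compat; lra); lra).
    apply Rmult_le_compat_r with (r := / ds + pinf) in HCFL; [|lra].
    rewrite Rinv_l in HCFL; lra. }
  assert (Hsg : forall j, (1 <= j)%nat -> 0 < sgrid ds j).
  { intros j Hj. unfold sgrid. apply le_INR in Hj. simpl in Hj.
    apply Rmult_lt_0_compat; lra. }
  assert (Hple : forall j x, (1 <= j)%nat -> 0 <= x -> 0 <= p (sgrid ds j) x <= pinf).
  { intros j x Hj Hx. split. apply Hp_nonneg; auto.
    destruct Hpinf as [Hub _]. rewrite <- (Rabs_pos_eq (p (sgrid ds j) x)).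
    apply Hub. exists (sgrid ds j), x. repeat split; auto.
    apply Hp_nonneg; auto. }
  set (M := norm1 ds (n 0%nat)).
  assert (HM0 : is_series (fun j => ds * n 0%nat (S j)) M).
  { unfold M, norm1. apply Series_correct in Hn0_l1.
    apply is_series_ext with (2 := Hn0_l1). intros j.
    rewrite Rabs_pos_eq; auto. apply Hn0_nonneg. lia. }
  assert (Hall : forall m, (forall j, (1 <= j)%nat -> 0 <= n m j) /\
                   is_series (fun j => ds * n m (S j)) M).
  { induction m as [|m [IHpos IHs]].
    - split; auto.
    - assert (Hnn : forall j, 0 <= n m j).
      { intros [|j]. rewrite Hbd. apply HN_nonneg. apply IHpos. lia. }
      split.
      + intros j Hj. rewrite Hstep by auto.
        destruct (Hple j (N m) Hj (HN_nonneg m)) as [H1 H2].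
        assert (Hc : 0 <= 1 - dt / ds - dt * p (sgrid ds j) (N m)).
        { unfold Rdiv. assert (dt * p (sgrid ds j) (N m) <= dt * pinf)
            by (apply Rmult_le_compat_l; lra). nra. }
        assert (0 <= dt / ds) by (unfold Rdiv; apply Rmult_le_pos; [lra| left; apply Rinv_0_lt_compat; lra]).
        pose proof (Hnn j). pose proof (Hnn (j-1)%nat).
        replace (n m j - dt / ds * (n m j - n m (j - 1)%nat) - dt * p (sgrid ds j) (N m) * n m j)
          with ((1 - dt / ds - dt * p (sgrid ds j) (N m)) * n m j + dt / ds * n m (j-1)%nat) by ring.
        apply Rplus_le_le_0_compat; apply Rmult_le_pos; auto.
      +
        assert (Hb : is_series (fun j => ds * n m j) (ds * N m + M)).
        { apply is_series_decr_1. rewrite Hbd.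
          match goal with |- is_series _ ?l => replace l with M end. exact IHs.
          unfold plus, opp; simpl. ring. }
        pose proof (is_series_scal (1 - dt / ds) _ _ IHs) as A1.
        pose proof (is_series_scal (dt / ds) _ _ Hb) as A2.
        pose proof (is_series_scal dt _ _ (HN_eq m)) as A3.
        pose proof (is_series_minus _ _ _ _ (is_series_plus _ _ _ _ A1 A2) A3) as A.
        replace M with (plus (plus (scal (1 - dt / ds) M) (scal (dt / ds) (ds * N m + M)))
                         (opp (scal dt (N m)))).
        2:{ unfold plus, opp, scal; simpl; unfold mult; simpl. field. lra. }
        apply is_series_ext with (2 := A). intros j.
        unfold plus, opp, scal; simpl; unfold mult; simpl.
        rewrite (Hstep m (S j)) by lia. replace (S j - 1)%nat with j by lia.
        field. lra. }
  intros m. destruct (Hall m) as [Hpos Hs]. split; auto.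
  apply is_series_ext with (2 := Hs). intros j. rewrite Rabs_pos_eq; auto.
  apply Hpos. lia.
Qed.
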